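(* Let $\phi:\mathbb{R}^2\rightarrow\mathbb{R}^2$ be an invertible affine transformation and let $\sigma:\mathbb R^2\to\mathbb R^2$ be the coordinatewise $\textsc{ReLU}$, $\sigma(x_1,x_2)=(\max\{x_1,0\},\max\{x_2,0\})$. Then there exist $a_1,a_2\in\mathbb{R}^2$ and $b_1,b_2\in\mathbb{R}$ such that, with $\mathcal S:=\{x\in\mathbb R^2:\langle a_1,x\rangle+b_1\ge0,\ \langle a_2,x\rangle+b_2\ge0\}$ and $x^\prime:=\phi^{-1}\circ\sigma\circ\phi(x)$, the following hold: if $x\in\mathcal S$, then $x^\prime=x$; if $x\in\mathbb R^2\setminus\mathcal S$, then $x^\prime\ne x$ and $x^\prime\in\partial\mathcal S$.
   Context: $\partial\mathcal S$ denotes the boundary of $\mathcal S$. *)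

(* Defs.v *)
From HB Require Import structures.
From mathcomp Require Import all_boot all_order all_algebra.
From mathcomp Require Import all_classical all_reals all_analysis.
Set Implicit Arguments. Unset Strict Implicit. Unset Printing Implicit Defensive.
Import Order.TTheory GRing.Theory Num.Theory.
Import numFieldNormedType.Exports.
Local Open Scope classical_set_scope.
Local Open Scope ring_scope.

Definition dotp (R : realType) (a x : 'rV[R]_2) : R := \sum_(i < 2) a 0 i * x 0 i.

Definition relu (R : realType) (x : 'rV[R]_2) : 'rV[R]_2 :=
  \row_(i < 2) Num.max (x 0 i) 0.

Definition affine_map (R : realType) (A : 'M[R]_2) (c : 'rV[R]_2) (x : 'rV[R]_2)
  : 'rV[R]_2 := x *m A + c.
Definition affine_inv (R : realType) (A : 'M[R]_2) (c : 'rV[R]_2) (y : 'rV[R]_2)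
  : 'rV[R]_2 := (y - c) *m invmx A.

Definition halfplanes (R : realType) (a1 a2 : 'rV[R]_2) (b1 b2 : R) : set 'rV[R]_2 :=
  [set x | 0 <= dotp a1 x + b1 /\ 0 <= dotp a2 x + b2].

Definition boundary (R : realType) (S : set 'rV[R]_2) : set 'rV[R]_2 :=
  closure S `\` interior S.

(* Main.v *)
Require Import Defs.
From HB Require Import structures.
From mathcomp Require Import all_boot all_order all_algebra.
From mathcomp Require Import all_classical all_reals all_analysis.
From mathcomp Require Import lra.
Import Order.TTheory GRing.Theory Num.Theory.
Import numFieldNormedType.Exports.
Local Open Scope classical_set_scope.
Local Open Scope ring_scope.

Theorem lemma1 (R : realType) (A : 'M[R]_2) (c : 'rV[R]_2) (hA : A \in unitmx) :
  exists (a1 a2 : 'rV[R]_2) (b1 b2 : R),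
    forall x : 'rV[R]_2,
      let x' := affine_inv A c (relu (affine_map A c x)) in
      (halfplanes a1 a2 b1 b2 x -> x' = x) /\
      (~ halfplanes a1 a2 b1 b2 x ->
         x' <> x /\ boundary (halfplanes a1 a2 b1 b2) x').
Proof.
pose a (k : 'I_2) : 'rV[R]_2 := \row_j A j k.
have key : forall k z, dotp (a k) z + c 0 k = affine_map A c z 0 k.
  move=> k z; rewrite /dotp /affine_map !mxE; congr (_ + _).
  by apply: eq_bigr => j _; rewrite mxE mulrC.
have Sdef : forall z, halfplanes (a 0) (a 1) (c 0 0) (c 0 1) z <->
    (forall k, 0 <= affine_map A c z 0 k).
  move=> z; rewrite /halfplanes /= !key; split.
    case=> h0 h1 [[|[|m]] Hm] //.
      by rewrite (_ : Ordinal Hm = 0) //; apply/val_inj.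
    by rewrite (_ : Ordinal Hm = 1) //; apply/val_inj.
  by move=> h; split; apply: h.
have mapinv : forall y, affine_map A c (affine_inv A c y) = y.
  by move=> y; rewrite /affine_map /affine_inv mulmxKV // subrK.
have invmap : forall z, affine_inv A c (affine_map A c z) = z.
  by move=> z; rewrite /affine_map /affine_inv addrK mulmxK.
exists (a 0), (a 1), (c 0 0), (c 0 1) => x x'; split.
  move=> /Sdef Hx; rewrite /x'.
  suff -> : relu (affine_map A c x) = affine_map A c x by rewrite invmap.
  by apply/rowP => k; rewrite mxE; apply/max_idPl; apply: Hx.
move=> nS.
have [k Hk] : exists k, affine_map A c x 0 k < 0.
  apply/not_existsP => H; apply: nS; apply/Sdef => k.
  by rewrite leNgt; apply/negP => /(H k).
have Hx'k : affine_map A c x' 0 k = 0.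
  by rewrite /x' mapinv mxE; apply/max_idPr/ltW.
have Sx' : halfplanes (a 0) (a 1) (c 0 0) (c 0 1) x'.
  by apply/Sdef => j; rewrite /x' mapinv mxE le_max lexx orbT.
split.
  move=> E; move: Hk; rewrite -E Hx'k; by rewrite ltxx.
split; first exact: subset_closure.
move=> Hint.
pose v : 'rV[R]_2 := delta_mx 0 k *m invmx A.
pose f (t : R) := x' - t *: v.
have fc : f t @[t --> (0:R)] --> f 0.
  apply: cvgB; first exact: cvg_cst.
  by apply: cvgZr_tmp; exact: cvg_id.
have : nbhs (0:R) (f @^-1` halfplanes (a 0) (a 1) (c 0 0) (c 0 1)).
  apply: fc; rewrite /f scale0r subr0; exact: Hint.
move=> /nbhs_ballP [e /= e0 He].
have : f (e / 2) \in halfplanes (a 0) (a 1) (c 0 0) (c 0 1).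
  apply/mem_set; apply: He; rewrite /ball /= sub0r normrN ger0_norm; lra.
move=> /set_mem /Sdef /(_ k).
have -> : affine_map A c (f (e / 2)) = affine_map A c x' - (e / 2) *: delta_mx 0 k.
  by rewrite /affine_map /f /v mulmxBl -scalemxAl (mulmxKV hA (delta_mx 0 k)) addrAC.
move: (affine_map A c x') Hx'k => y Hy.
rewrite !mxE Hy eqxx /= eqxx mulr1 sub0r oppr_ge0; lra.
Qed.
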